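(* Suppose that every even Gaussian integer $a+ib$ with integers $a>1$, $b>1$ can be written as $z=p+q$ with $p,q$ Gaussian primes lying in $Q=\{x+iy : x,y\in\mathbb{Z},\ x>0,\ y>0\}$. Then there are infinitely many positive integers $n$ such that $n^2+1$ is a rational prime.
   Context: Gaussian integers are the elements $a+ib$ of $\mathbb{Z}[i]$, with norm $N(a+ib)=a^2+b^2$. A Gaussian prime is an irreducible (equivalently, prime) element of $\mathbb{Z}[i]$. A Gaussian integer $z$ is called even if $N(z)$ is even (equivalently, $a+b$ is even, equivalently $z$ is divisible by $1+i$). $Q$ denotes the open first quadrant of Gaussian integers $\{a+ib: a>0, b>0\}$. *)

(* Defs.v *)
From Stdlib Require Import ZArith Znumtheory.
Open Scope Z_scope.

Record gauss := GI { re : Z; im : Z }.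

Definition gadd (z w : gauss) : gauss := GI (re z + re w) (im z + im w).
Definition gmul (z w : gauss) : gauss :=
  GI (re z * re w - im z * im w) (re z * im w + im z * re w).
Definition gzero : gauss := GI 0 0.
Definition gone : gauss := GI 1 0.

Definition gnorm (z : gauss) : Z := re z * re z + im z * im z.

Definition gunit (u : gauss) : Prop := exists v, gmul u v = gone.

Definition gprime (p : gauss) : Prop :=
  p <> gzero /\ ~ gunit p /\
  forall u v : gauss, p = gmul u v -> gunit u \/ gunit v.

Definition geven (z : gauss) : Prop := Z.Even (gnorm z).

Definition inQ (z : gauss) : Prop := 0 < re z /\ 0 < im z.

(* Main.v *)
Require Import Defs.
From Stdlib Require Import ZArith Znumtheory Lia Classical.
Open Scope Z_scope.

Definition gsub (z w : gauss) : gauss := GI (re z - re w) (im z - im w).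

Lemma gnorm_pos g : g <> gzero -> 0 < gnorm g.
Proof.
  destruct g as [g1 g2]; unfold gnorm, gzero; simpl; intro H.
  destruct (Z.eq_dec g1 0); destruct (Z.eq_dec g2 0); subst; try congruence; nia.
Qed.

Lemma gsub_zero a c : gsub a c = gzero -> a = c.
Proof.
  destruct a as [a1 a2], c as [c1 c2]; unfold gsub, gzero; cbn [re im].
  intro H. injection H as H1 H2. f_equal; lia.
Qed.

Lemma gnorm_nonneg g : 0 <= gnorm g.
Proof. destruct g; unfold gnorm; simpl; nia. Qed.

Lemma gdiv a g : g <> gzero -> exists q, gnorm (gsub a (gmul g q)) < gnorm g.
Proof.
  intro Hg. pose proof (gnorm_pos g Hg) as Hm.
  destruct a as [a1 a2]; destruct g as [g1 g2]; unfold gnorm in *; cbn [re im] in *.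
  set (m := g1*g1+g2*g2) in *.
  set (s := a1*g1+a2*g2). set (t := a2*g1 - a1*g2).
  set (u := (2*s+m)/(2*m)). set (w := (2*t+m)/(2*m)).
  exists (GI u w). unfold gsub, gmul; simpl.
  pose proof (Z.div_mod (2*s+m) (2*m) ltac:(lia)) as D1.
  pose proof (Z.mod_pos_bound (2*s+m) (2*m) ltac:(lia)) as B1.
  pose proof (Z.div_mod (2*t+m) (2*m) ltac:(lia)) as D2.
  pose proof (Z.mod_pos_bound (2*t+m) (2*m) ltac:(lia)) as B2.
  fold u in D1. fold w in D2.
  set (r1 := a1 - (g1*u - g2*w)). set (r2 := a2 - (g1*w + g2*u)).
  assert (E : (r1*r1 + r2*r2) * m = (s - m*u)*(s-m*u) + (t-m*w)*(t-m*w))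
    by (unfold r1, r2, m, s, t; ring).
  set (S := s - m*u) in *. set (T := t - m*w) in *.
  assert (-m <= 2*S < m) by (unfold S; lia).
  assert (-m <= 2*T < m) by (unfold T; lia).
  assert (0 <= r1*r1+r2*r2) by nia.
  clearbody S T r1 r2 m. clear D1 D2 B1 B2.
  set (Nr := r1*r1+r2*r2) in *. clearbody Nr.
  assert (4*(S*S) <= m*m) by nia.
  assert (4*(T*T) <= m*m) by nia.
  assert (2*Nr*m <= m*m) by lia.
  assert (2*Nr <= m) by nia.
  lia.
Qed.

Definition inI b d g := exists al be : gauss,
  g = gadd (gmul al (GI 1 b)) (gmul be (GI d 0)).

Section Key.
Variables b d k : Z.
Hypothesis Hb : 0 < b.
Hypothesis Hd : 1 < d < 1 + b*b.
Hypothesis Hk : 1 + b*b = d*k.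
Hypothesis Hp : gprime (GI 1 b).

Lemma finish g q1 q2 : inI b d g -> GI 1 b = gmul g q1 -> GI d 0 = gmul g q2 -> False.
Proof.
  intros [al [be Hg]] E1 E2.
  destruct Hp as [_ [_ Hirr]].
  destruct (Hirr _ _ E1) as [[v Hv] | [v Hv]].
  - subst g. destruct al as [a1 a2], be as [b1 b2], v as [v1 v2].
    unfold gmul, gadd, gone in Hv; simpl in Hv. injection Hv as H1 H2.
    set (A1 := a1*v1 - a2*v2). set (B1 := b1*v1 - b2*v2). set (B2 := b1*v2 + b2*v1).
    lazymatch type of H1 with ?X = 1 => lazymatch type of H2 with ?Y = 0 =>
      assert (E : X + b*Y = A1*(1+b*b) + d*(B1 + B2*b)) by (unfold A1, B1, B2; ring)
    end end.
    rewrite H1, H2, Hk in E. clearbody A1 B1 B2.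
    assert (F : d*(A1*k+B1+B2*b) = 1) by (rewrite Z.mul_0_r, Z.add_0_r in E; rewrite E; ring).
    set (X := A1*k+B1+B2*b) in F. clearbody X. clear -F Hd. destruct (Z_le_gt_dec X 0); nia.
  - destruct g as [g1 g2], q1 as [x1 x2], q2 as [y1 y2], v as [v1 v2].
    unfold gmul, gone in *; cbn [re im] in *.
    injection E1 as F1 F2. injection E2 as G1 G2. injection Hv as H1 H2.
    assert (Eg1 : g1 = 1*v1 - b*v2).
    { rewrite F1, F2. transitivity (g1*((x1*v1 - x2*v2)) - g2*(x1*v2+x2*v1)).
      rewrite H1, H2; ring. ring. }
    assert (Eg2 : g2 = 1*v2 + b*v1).
    { rewrite F1, F2. transitivity (g1*((x1*v2 + x2*v1)) + g2*(x1*v1-x2*v2)).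
      rewrite H1, H2; ring. ring. }
    rewrite Eg1, Eg2 in G1, G2.
    set (w1 := v1*y1 - v2*y2) in *. set (w2 := v1*y2 + v2*y1).
    assert (d = w1 - b*w2) by (rewrite G1; unfold w1, w2; ring).
    assert (0 = w2 + b*w1) by (rewrite G2; unfold w1, w2; ring).
    assert (w2 = - b*w1) by lia. subst w2.
    assert (Hw : d = w1*(1+b*b)) by (rewrite H; rewrite H3; ring).
    clearbody w1. clear -Hw Hd Hb. destruct (Z_le_gt_dec w1 0); nia.
Qed.

Lemma descent (n : nat) : forall g, inI b d g -> g <> gzero -> gnorm g < Z.of_nat n -> False.
Proof.
  induction n as [|n IH]; intros g HI Hg Hn.
  - pose proof (gnorm_nonneg g); lia.
  - destruct (gdiv (GI 1 b) g Hg) as [q1 Hq1].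
    destruct (gdiv (GI d 0) g Hg) as [q2 Hq2].
    destruct HI as [al [be Hgdef]].
    destruct (classic (gsub (GI 1 b) (gmul g q1) = gzero)) as [Z1|Z1].
    + destruct (classic (gsub (GI d 0) (gmul g q2) = gzero)) as [Z2|Z2].
      * apply (finish g q1 q2).
        -- exists al, be; exact Hgdef.
        -- apply gsub_zero; exact Z1.
        -- apply gsub_zero; exact Z2.
      * refine (IH _ _ Z2 _); [| rewrite Nat2Z.inj_succ in Hn; lia].
        exists (gsub gzero (gmul al q2)), (gsub gone (gmul be q2)).
        subst g. destruct al as [a1 a2], be as [b1 b2], q2 as [x1 x2]; unfold gsub, gmul, gadd, gzero, gone; cbn [re im].
        f_equal; ring.
    + refine (IH _ _ Z1 _); [| rewrite Nat2Z.inj_succ in Hn; lia].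
      exists (gsub gone (gmul al q1)), (gsub gzero (gmul be q1)).
      subst g. destruct al as [a1 a2], be as [b1 b2], q1 as [x1 x2]; unfold gsub, gmul, gadd, gzero, gone; cbn [re im].
      f_equal; ring.
Qed.
End Key.

Lemma key b : 0 < b -> gprime (GI 1 b) -> prime (b*b+1).
Proof.
  intros Hb Hp.
  destruct (prime_dec (b*b+1)) as [P|P]; [exact P|exfalso].
  destruct (not_prime_divide (b*b+1) ltac:(nia) P) as [d [Hd [k Hk]]].
  apply (descent b d k ltac:(lia) ltac:(lia) Hp (S (Z.to_nat (gnorm (GI 1 b)))) (GI 1 b)).
  - exists gone, gzero. unfold gadd, gmul, gone, gzero; cbn [re im]. f_equal; ring.
  - unfold gzero; intro H; injection H; lia.
  - pose proof (gnorm_nonneg (GI 1 b)). lia.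
Qed.

Theorem mainTheorem1 :
  (forall a b : Z, 1 < a -> 1 < b -> geven (GI a b) ->
     exists p q : gauss, gprime p /\ gprime q /\ inQ p /\ inQ q /\
                         GI a b = gadd p q) ->
  forall N : Z, exists n : Z, N < n /\ 0 < n /\ prime (n * n + 1).
Proof.
  intros H N.
  set (m := Z.max N 1 + 1). assert (Hm : N < m /\ 1 <= m) by (unfold m; lia). clearbody m.
  destruct (H 2 (2*m) ltac:(lia) ltac:(lia)) as [p [q [Pp [Pq [Qp [Qq E]]]]]].
  { unfold geven, gnorm; cbn [re im]. exists (2 + 2*m*m). ring. }
  destruct p as [p1 p2], q as [q1 q2]; unfold inQ, gadd in *; cbn [re im] in *.
  assert (E1 := f_equal re E). assert (E2 := f_equal im E). cbn [re im] in E1, E2.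
  assert (p1 = 1) by lia. assert (q1 = 1) by lia. subst p1 q1.
  destruct (Z_le_gt_dec m p2).
  - exists p2. split; [lia|split;[lia|apply key; tauto]].
  - exists q2. split; [lia|split;[lia|apply key; tauto]].
Qed.
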